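(* Let $\mathcal{M}'$ be the set of all square matrices $(a_{i,j})$ of order at least $1$ with entries in $\{0,1\}$ such that: (1) $a_{i,i}=0$ for all $i$; (2) if $a_{i,j}=0$ then $a_{j,i}=1$ (for $i\neq j$); (3) if $a_{i,j}=a_{j,k}=0$ then $a_{i,k}=0$. Call $A,B\in\mathcal{M}'$ equivalent if there is a permutation matrix $E$ with $EAE^{-1}=B$, and let $\mathcal{M}$ be the set of equivalence classes. Then the map sending a nonempty finite $T_0$-space $X$ to the equivalence class of $X_M$ induces a bijection between the set of homeomorphism classes of nonempty finite $T_0$-spaces and $\mathcal{M}$.
   Context: A finite $T_0$-space $X$ is identified with a finite poset via $x\le y$ iff $U_x\subseteq U_y$, where $U_x$ is the intersection of all open sets containing $x$ (conversely, the down-sets of a finite poset form a $T_0$ topology); continuous maps are exactly order-preserving maps. For $X=\{x_1,\dots,x_n\}$ with a fixed labelling, $X_M=(x_{i,j})$ is the $n\times n$ matrix with $x_{i,j}=0$ if $x_i\le x_j$ and $x_{i,j}=1$ otherwise. *)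

(* Defs.v *)
From HB Require Import structures.
From mathcomp Require Import all_boot all_order all_algebra all_fingroup.
Set Implicit Arguments. Unset Strict Implicit. Unset Printing Implicit Defensive.
Import GRing.Theory.
Local Open Scope ring_scope.

(* A topology on a finite type T, given by its family of open sets.
   Since T is finite, closure under binary unions together with set0
   is closure under arbitrary unions. *)
Definition is_topology (T : finType) (O : {set {set T}}) : Prop :=
  [/\ set0 \in O, setT \in O,
      (forall U V, U \in O -> V \in O -> U :|: V \in O) &
      (forall U V, U \in O -> V \in O -> U :&: V \in O)].

Definition is_T0 (T : finType) (O : {set {set T}}) : Prop :=
  forall x y : T, x != y -> exists2 U, U \in O & (x \in U) != (y \in U).

Definition fin_T0_space (T : finType) (O : {set {set T}}) : Prop :=
  [/\ is_topology O, is_T0 O & (0 < #|T|)%N].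

Definition minopen (T : finType) (O : {set {set T}}) (x : T) : {set T} :=
  \bigcap_(U in O | x \in U) U.

Definition sp_le (T : finType) (O : {set {set T}}) (x y : T) : bool :=
  minopen O x \subset minopen O y.

(* X_M for the labelling lab : 'I_n -> T (x_i = lab i) *)
Definition space_mx (T : finType) (O : {set {set T}}) (n : nat)
  (lab : 'I_n -> T) : 'M[int]_n :=
  \matrix_(i, j) (if sp_le O (lab i) (lab j) then 0 else 1).

Definition homeomorphic (T1 T2 : finType) (O1 : {set {set T1}})
  (O2 : {set {set T2}}) : Prop :=
  exists f : T1 -> T2, bijective f /\ forall U : {set T1}, (U \in O1) = (f @: U \in O2).

Definition inMprime (n : nat) (A : 'M[int]_n) : Prop :=
  [/\ (0 < n)%N,
      (forall i j, A i j = 0 \/ A i j = 1),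
      (forall i, A i i = 0),
      (forall i j, i != j -> A i j = 0 -> A j i = 1) &
      (forall i j k, A i j = 0 -> A j k = 0 -> A i k = 0)].

Definition mx_equiv (n m : nat) (A : 'M[int]_n) (B : 'M[int]_m) : Prop :=
  exists e : n = m, exists E : 'M[int]_m,
    is_perm_mx E /\ E *m castmx (e, e) A *m invmx E = B.

(* Main.v *)
Require Import Defs.
From HB Require Import structures.
From mathcomp Require Import all_boot all_order all_algebra all_fingroup.
Set Implicit Arguments. Unset Strict Implicit. Unset Printing Implicit Defensive.

Section Topo.
Variables (T : finType) (O : {set {set T}}).
Hypothesis tO : is_topology O.

Lemma mo_self x : x \in minopen O x.
Proof. by apply/bigcapP => U /andP[]. Qed.

Lemma mo_open x : minopen O x \in O.
Proof.
case: tO => _ hT _ hI.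
rewrite /minopen; apply: (big_ind (fun V => V \in O)) => //.
by move=> U /andP[].
Qed.

Lemma mo_sub U x : U \in O -> x \in U -> minopen O x \subset U.
Proof. by move=> hU hx; apply: bigcap_inf; rewrite hU hx. Qed.

Lemma sp_leE x y : sp_le O x y = (x \in minopen O y).
Proof.
apply/idP/idP => [h|h].
  exact: (subsetP h _ (mo_self x)).
exact: mo_sub (mo_open y) h.
Qed.

Lemma openE U : (U \in O) <-> (forall x y, y \in U -> x \in minopen O y -> x \in U).
Proof.
split.
  by move=> hU x y hy hx; exact: (subsetP (mo_sub hU hy)).
move=> hd.
have -> : U = \bigcup_(y in U) minopen O y.
  apply/setP => z; apply/idP/bigcupP => [hz|[y hy hz]].
    by exists z => //; apply: mo_self.
  exact: hd hz.
case: tO => h0 _ hU _.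
by apply: (big_ind (fun V => V \in O)) => // y _; apply: mo_open.
Qed.

Lemma mo_trans x y z : x \in minopen O y -> y \in minopen O z -> x \in minopen O z.
Proof. by rewrite -!sp_leE /sp_le; apply: subset_trans. Qed.


End Topo.

Lemma preim_open (T1 T2 : finType) (O1 : {set {set T1}}) (O2 : {set {set T2}})
  (f : T1 -> T2) (g : T2 -> T1) :
  cancel f g -> cancel g f ->
  (forall U : {set T1}, (U \in O1) = (f @: U \in O2)) ->
  forall V, V \in O2 -> g @: V \in O1.
Proof.
move=> fg gf hf V hV; rewrite hf -imset_comp.
have -> : [set (f \o g) x | x in V] = V.
  by rewrite (eq_imset _ gf) imset_id.
done.
Qed.

Lemma homeo_mo (T1 T2 : finType) (O1 : {set {set T1}}) (O2 : {set {set T2}})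
  (f : T1 -> T2) :
  is_topology O1 -> is_topology O2 -> bijective f ->
  (forall U : {set T1}, (U \in O1) = (f @: U \in O2)) ->
  forall x y, (x \in minopen O1 y) = (f x \in minopen O2 (f y)).
Proof.
move=> t1 t2 [g fg gf] hf x y; apply/idP/idP => h.
  have hO := preim_open fg gf hf (mo_open t2 (f y)).
  have hy : y \in g @: minopen O2 (f y).
    by rewrite -{1}(fg y); apply: imset_f; apply: mo_self.
  have /imsetP[z hz ->] := subsetP (mo_sub hO hy) x h.
  by rewrite gf.
have hO : f @: minopen O1 y \in O2 by rewrite -hf; apply: mo_open.
have hy : f y \in f @: minopen O1 y by apply: imset_f; apply: mo_self.
have := subsetP (mo_sub hO hy) _ h.
by rewrite mem_imset //; apply: can_inj fg.
Qed.

Lemma mo_homeo (T1 T2 : finType) (O1 : {set {set T1}}) (O2 : {set {set T2}})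
  (f : T1 -> T2) :
  is_topology O1 -> is_topology O2 -> bijective f ->
  (forall x y, (x \in minopen O1 y) = (f x \in minopen O2 (f y))) ->
  forall U : {set T1}, (U \in O1) = (f @: U \in O2).
Proof.
move=> t1 t2 [g fg gf] hm U.
apply/idP/idP => hU.
  apply/(openE t2) => x' y' /imsetP[y hy ->] hx.
  rewrite -(gf x') mem_imset; last exact: can_inj fg.
  by move/(openE t1): hU => hU; apply: (hU _ y) => //; rewrite hm gf.
apply/(openE t1) => x y hy hx.
rewrite -(mem_imset _ _ (can_inj fg)).
by move/(openE t2): hU => hU; apply: (hU _ (f y)); [apply: imset_f hy | rewrite -hm].
Qed.

Section Mx.
Local Open Scope ring_scope.
Lemma invmx_perm n (s : 'S_n) : invmx (perm_mx s) = perm_mx s^-1 :> 'M[int]_n.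
Proof.
rewrite -[RHS](mulKmx (unitmx_perm _ s)) -perm_mxM mulgV perm_mx1 mulmx1 //.
Qed.

Lemma conj_perm n (s : 'S_n) (A : 'M[int]_n) :
  perm_mx s *m A *m invmx (perm_mx s) = \matrix_(i, j) A (s i) (s j).
Proof.
rewrite invmx_perm -row_permE -[s in perm_mx s^-1]invgK -col_permE.
by rewrite invgK; apply/matrixP => i j; rewrite !mxE.
Qed.

Lemma ite01 (b c : bool) :
  ((if b then 0 else 1) = (if c then 0 else 1) :> int) -> b = c.
Proof. by case: b; case: c. Qed.
End Mx.

Theorem mainTheorem1 :
  (* the map lands in M' *)
  (forall (T : finType) (O : {set {set T}}) (n : nat) (lab : 'I_n -> T),
      fin_T0_space O -> bijective lab -> inMprime (space_mx O lab))
  /\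
  (* well defined on homeomorphism classes (and independent of labelling)
     and injective on them *)
  (forall (T1 : finType) (O1 : {set {set T1}}) (n1 : nat) (lab1 : 'I_n1 -> T1)
          (T2 : finType) (O2 : {set {set T2}}) (n2 : nat) (lab2 : 'I_n2 -> T2),
      fin_T0_space O1 -> bijective lab1 ->
      fin_T0_space O2 -> bijective lab2 ->
      (homeomorphic O1 O2 <-> mx_equiv (space_mx O1 lab1) (space_mx O2 lab2)))
  /\
  (* surjective onto the equivalence classes of M' *)
  (forall (n : nat) (A : 'M[int]_n), inMprime A ->
      exists (T : finType) (O : {set {set T}}) (lab : 'I_n -> T),
        [/\ fin_T0_space O, bijective lab & mx_equiv (space_mx O lab) A]).
Proof.
split.
  move=> T O n lab [tO t0 cT] [g lg gl].
  split.
  - case/card_gt0P: cT => x _; exact: leq_ltn_trans (leq0n _) (ltn_ord (g x)).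
  - by move=> i j; rewrite mxE; case: ifP; [left|right].
  - by move=> i; rewrite mxE /sp_le subxx.
  - move=> i j nij; rewrite !mxE; case: ifP => // h1 _; case: ifP => // h2.
    exfalso.
    have nl : lab i != lab j by rewrite (inj_eq (can_inj lg)).
    have [U hU] := t0 _ _ nl.
    have emo : minopen O (lab i) = minopen O (lab j).
      by apply/eqP; rewrite eqEsubset; apply/andP; split; [exact: h1 | exact: h2].
    case hi: (lab i \in U); case hj: (lab j \in U) => //= _.
      have := subsetP (mo_sub hU hi) (lab j).
      by rewrite emo mo_self hj => /(_ isT).
    have := subsetP (mo_sub hU hj) (lab i).
    by rewrite -emo mo_self hi => /(_ isT).
  - move=> i j k; rewrite !mxE; case: ifP => // h1 _; case: ifP => // h2 _.
    by rewrite /sp_le in h1 h2 *; rewrite (subset_trans h1 h2).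
split.
  move=> T1 O1 n1 lab1 T2 O2 n2 lab2 [t1 _ _] b1 [t2 _ _] b2.
  have [g1 l1 r1] := b1; have [g2 l2 r2] := b2.
  split.
    case=> f [bf hf].
    have en : n1 = n2.
      by rewrite -(card_ord n1) -(card_ord n2) (bij_eq_card b1) (bij_eq_card bf) (bij_eq_card b2).
    subst n2.
    have hmo := homeo_mo t1 t2 bf hf.
    have inj : injective (fun i => g2 (f (lab1 i))).
      move=> i j /(can_inj r2) /(bij_inj bf); apply: (can_inj l1).
    pose sg := perm inj.
    have key k : f (lab1 k) = lab2 (sg k) by rewrite permE r2.
    exists erefl, (perm_mx sg^-1); split; first exact: perm_mx_is_perm.
    rewrite castmx_id conj_perm; apply/matrixP => i j; rewrite !mxE.
    by rewrite !(sp_leE t1) !(sp_leE t2) hmo !key !permKV.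
  case=> e [E [/is_perm_mxP [s ->] hE]].
  subst n2; rewrite castmx_id conj_perm in hE.
  have hle i j : sp_le O2 (lab2 i) (lab2 j) = sp_le O1 (lab1 (s i)) (lab1 (s j)).
    by move/matrixP: hE => /(_ i j); rewrite !mxE => /ite01.
  pose f := fun x => lab2 ((s^-1)%g (g1 x)).
  have bf : bijective f.
    exists (fun y => lab1 (s (g2 y))) => [x|y]; rewrite /f.
      by rewrite l2 permKV r1.
    by rewrite l1 permK r2.
  exists f; split => //; apply: mo_homeo => // x y.
  by rewrite -(sp_leE t1) -(sp_leE t2) hle /f !permKV !r1.
move=> n A [n0 h01 hd hanti htr].
pose O := [set U : {set 'I_n} | [forall j, forall i, (j \in U) && (A i j == 0) ==> (i \in U)]].
have tO : is_topology O.
  split.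
  - by rewrite inE; apply/forallP => j; apply/forallP => i; rewrite in_set0.
  - by rewrite inE; apply/forallP => j; apply/forallP => i; apply/implyP; rewrite in_setT.
  - move=> U V; rewrite !inE => /forallP hU /forallP hV.
    apply/forallP => j; apply/forallP => i; apply/implyP; rewrite !inE.
    case/andP => /orP[hj|hj] hij.
      by move/forallP: (hU j) => /(_ i); rewrite hj hij /= => ->.
    by move/forallP: (hV j) => /(_ i); rewrite hj hij /= => ->; rewrite orbT.
  - move=> U V; rewrite !inE => /forallP hU /forallP hV.
    apply/forallP => j; apply/forallP => i; apply/implyP; rewrite !inE.
    case/andP => /andP[hjU hjV] hij.
    move/forallP: (hU j) => /(_ i); rewrite hjU hij /= => ->.
    by move/forallP: (hV j) => /(_ i); rewrite hjV hij /= => ->.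
pose dn j := [set k | A k j == 0].
have dnO j : dn j \in O.
  rewrite inE; apply/forallP => k; apply/forallP => i; apply/implyP.
  by rewrite !inE => /andP[/eqP h1 /eqP h2]; apply/eqP; apply: htr h2 h1.
have dnj j : j \in dn j by rewrite inE hd.
have moE j : minopen O j = dn j.
  apply/eqP; rewrite eqEsubset mo_sub //=.
  apply/subsetP => k hk; apply/bigcapP => U /andP[hU hjU].
  move: hU; rewrite inE => /forallP /(_ j) /forallP /(_ k).
  by rewrite hjU; move: hk; rewrite inE => -> /=.
exists 'I_n, O, id; split.
- split => //; last by rewrite card_ord.
  move=> i j nij.
  case h: (A i j == 0).
    exists (dn i) => //; rewrite dnj !inE.
    by rewrite (hanti i j nij (eqP h)).
  exists (dn j) => //; rewrite dnj !inE h.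
  done.
- by exists id.
- exists erefl, (1%:M)%R; split; first exact: is_perm_mx1.
  rewrite castmx_id invmx1 mul1mx mulmx1.
  apply/matrixP => i j; rewrite mxE (sp_leE tO) moE inE.
  by case: (h01 i j) => ->.
Qed.
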